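(* Suppose $x,x'\in(0,1)$ and $y\in(x,1)$. Let $y'\in(x',1)$ be such that $p_{x',1}(y')=p_{x,1}(y)$. Then $$p_{1,0}(x')-p_{1,0}(x)=p_{y',0}(x')-p_{y,0}(x).$$
   Context: For real $p\neq q$ and $w$ strictly between $p$ and $q$ (oriented interval $(p,q)$, $p>q$ allowed), $p_{p,q}(w)=\ln\frac{w-p}{q-w}$. *)

(* Defs.v *)
From Stdlib Require Import Reals.
Open Scope R_scope.

(* p_{p,q}(w) = ln ((w - p) / (q - w)), meaningful for w strictly between
   p and q (oriented interval, p > q allowed). *)
Definition pcoord (p q w : R) : R := ln ((w - p) / (q - w)).

(* Main.v *)
Require Import Defs.
From Stdlib Require Import Reals Lra.
Open Scope R_scope.

Theorem proposition2p5 (x x' y y' : R) :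
  0 < x < 1 -> 0 < x' < 1 -> x < y < 1 -> x' < y' < 1 ->
  pcoord x' 1 y' = pcoord x 1 y ->
  pcoord 1 0 x' - pcoord 1 0 x = pcoord y' 0 x' - pcoord y 0 x.
Proof.
  intros Hx Hx' Hy Hy' H. unfold pcoord in *.
  assert (P1 : 0 < (y' - x') / (1 - y')) by (apply Rdiv_lt_0_compat; lra).
  assert (P2 : 0 < (y - x) / (1 - y)) by (apply Rdiv_lt_0_compat; lra).
  apply ln_inv in H; auto.
  assert (K : (y' - x') * (1 - y) = (y - x) * (1 - y')).
  { apply (f_equal (fun t => t * (1 - y') * (1 - y))) in H.
    field_simplify in H; try lra. }
  assert (A : 0 < (x' - 1) / (0 - x')) by (apply Rdiv_lt_0_compat_neg; lra) ||
    (replace ((x' - 1) / (0 - x')) with ((1 - x') / x') by (field; lra);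
     apply Rdiv_lt_0_compat; lra).
  assert (B : 0 < (x - 1) / (0 - x)) by
    (replace ((x - 1) / (0 - x)) with ((1 - x) / x) by (field; lra);
     apply Rdiv_lt_0_compat; lra).
  assert (C : 0 < (x' - y') / (0 - x')) by
    (replace ((x' - y') / (0 - x')) with ((y' - x') / x') by (field; lra);
     apply Rdiv_lt_0_compat; lra).
  assert (D : 0 < (x - y) / (0 - x)) by
    (replace ((x - y) / (0 - x)) with ((y - x) / x) by (field; lra);
     apply Rdiv_lt_0_compat; lra).
  enough (E : ln ((x' - 1) / (0 - x')) + ln ((x - y) / (0 - x))
            = ln ((x' - y') / (0 - x')) + ln ((x - 1) / (0 - x))) by lra.
  rewrite <- !ln_mult by assumption. f_equal.
  replace ((x - y) / (0 - x)) with ((y - x) / x) by (field; lra).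
  replace ((x - 1) / (0 - x)) with ((1 - x) / x) by (field; lra).
  replace ((x' - 1) / (0 - x')) with ((1 - x') / x') by (field; lra).
  replace ((x' - y') / (0 - x')) with ((y' - x') / x') by (field; lra).
  assert (M : (1 - x') * (y - x) = (y' - x') * (1 - x)) by nra.
  unfold Rdiv. replace ((1 - x') * / x' * ((y - x) * / x)) with ((1 - x') * (y - x) * (/ x' * / x)) by ring.
  rewrite M. ring.

Qed.
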